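(* In CC, if $\Gamma\vdash M:A$, then $\mathrm{FV}(M)\vdash M:A$.
   Context: CC: expressions $x\mid U_i\mid\Pi x{:}A.B\mid L\,M\mid\lambda x{:}A.M$; contexts $\Gamma::=\cdot\mid\Gamma,x{:}A$; reduction $(\lambda x{:}A.N)\,M\triangleright N[M/x]$; equivalence $\equiv$ is joinability under $\triangleright^*$ plus $\eta$ (if $L\triangleright^*\lambda x{:}A.L'$, $M\triangleright^*M'$, $L'\equiv M'\,x$ then $L\equiv M$, and symmetrically). Typing and context formation (mutual): $\vdash\cdot$; $\vdash\Gamma,\Gamma\vdash A:U_i\Rightarrow\vdash\Gamma,x{:}A$; variables from a well-formed context; $U_i:U_{i+1}$; $\Pi x{:}A.B:U_{\max(i,j)}$ if $A:U_i$ and $B:U_j$ under $x{:}A$; $M\,N:B[N/x]$ if $M:\Pi x{:}A.B$, $N:A$; $\lambda x{:}A.M:\Pi x{:}A.B$ if $M:B$ under $x{:}A$; conversion to a type $B:U_i$ with $A\equiv B$. $\mathrm{FV}(M)$ takes the derivation of $\Gamma\vdash M:A$ as implicit argument: let $x_1,\dots,x_n$ be the unbound (free) variables of $M$ and of $A$, with $\Gamma\vdash x_k:A_k$; then $\mathrm{FV}(M)=\mathrm{FV}(A_1)\cup\dots\cup\mathrm{FV}(A_n)\cup(x_1{:}A_1,\dots,x_n{:}A_n)$, where the union $\Gamma_1\cup\Gamma_2$ of contexts is $\Gamma_1$ appended with the entries $x{:}A$ that appear only in $\Gamma_2$, preserving their order. *)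

(* Defs.v *)
(* Calculus of Constructions (CC) with a cumulative-free
   universe hierarchy U_i, locally nameless presentation:
   free variables are names (atoms = nat), bound variables are de Bruijn
   indices.  Reduction / equivalence are the standard de Bruijn ones on raw
   terms (so they make sense under binders with no side conditions). *)
From Stdlib Require Import List Arith PeanoNat.
Import ListNotations.

Definition atom := nat.

Inductive term : Type :=
  | bvar (n : nat)
  | fvar (x : atom)
  | univ (i : nat)
  | pi   (A B : term)
  | app  (L M : term)
  | lam  (A M : term).

Definition term_eq_dec : forall s t : term, {s = t} + {s <> t}.
Proof. decide equality; apply Nat.eq_dec. Defined.

Fixpoint lift (d c : nat) (t : term) : term :=
  match t with
  | bvar n => if c <=? n then bvar (n + d) else bvar n
  | fvar x => fvar x
  | univ i => univ i
  | pi A B => pi (lift d c A) (lift d (S c) B)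
  | app L M => app (lift d c L) (lift d c M)
  | lam A M => lam (lift d c A) (lift d (S c) M)
  end.

Fixpoint bsubst (k : nat) (u : term) (t : term) : term :=
  match t with
  | bvar n => if n =? k then lift k 0 u
              else if k <? n then bvar (n - 1) else bvar n
  | fvar x => fvar x
  | univ i => univ i
  | pi A B => pi (bsubst k u A) (bsubst (S k) u B)
  | app L M => app (bsubst k u L) (bsubst k u M)
  | lam A M => lam (bsubst k u A) (bsubst (S k) u M)
  end.

(* N[M/x] where x is the variable bound by the enclosing binder of N *)
Definition inst (N M : term) : term := bsubst 0 M N.
Definition open (N : term) (x : atom) : term := inst N (fvar x).

Inductive red1 : term -> term -> Prop :=
  | r_beta A N M : red1 (app (lam A N) M) (inst N M)
  | r_pi1 A A' B : red1 A A' -> red1 (pi A B) (pi A' B)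
  | r_pi2 A B B' : red1 B B' -> red1 (pi A B) (pi A B')
  | r_app1 L L' M : red1 L L' -> red1 (app L M) (app L' M)
  | r_app2 L M M' : red1 M M' -> red1 (app L M) (app L M')
  | r_lam1 A A' M : red1 A A' -> red1 (lam A M) (lam A' M)
  | r_lam2 A M M' : red1 M M' -> red1 (lam A M) (lam A M').

Inductive reds : term -> term -> Prop :=
  | reds_refl t : reds t t
  | reds_step s t u : red1 s t -> reds t u -> reds s u.

Inductive equiv : term -> term -> Prop :=
  | eq_join L M N : reds L N -> reds M N -> equiv L M
  | eq_eta1 L M A L' M' :
      reds L (lam A L') -> reds M M' ->
      equiv L' (app (lift 1 0 M') (bvar 0)) -> equiv L M
  | eq_eta2 L M A M' L' :
      reds L L' -> reds M (lam A M') ->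
      equiv (app (lift 1 0 L') (bvar 0)) M' -> equiv L M.

(* contexts, in left-to-right order: Gamma, x:A  is  Gamma ++ [(x,A)] *)
Definition ctx := list (atom * term).
Definition dom (G : ctx) : list atom := map fst G.

Inductive wf : ctx -> Prop :=
  | wf_nil : wf []
  | wf_ext G x A i :
      wf G -> typing G A (univ i) -> ~ In x (dom G) -> wf (G ++ [(x, A)])
with typing : ctx -> term -> term -> Prop :=
  | t_var G x A : wf G -> In (x, A) G -> typing G (fvar x) A
  | t_univ G i : wf G -> typing G (univ i) (univ (S i))
  | t_pi G A B i j (L : list atom) :
      typing G A (univ i) ->
      (forall x, ~ In x L -> typing (G ++ [(x, A)]) (open B x) (univ j)) ->
      typing G (pi A B) (univ (Nat.max i j))
  | t_app G M N A B :
      typing G M (pi A B) -> typing G N A -> typing G (app M N) (inst B N)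
  | t_lam G A M B (L : list atom) :
      (forall x, ~ In x L -> typing (G ++ [(x, A)]) (open M x) (open B x)) ->
      typing G (lam A M) (pi A B)
  | t_conv G M A B i :
      typing G M A -> typing G B (univ i) -> equiv A B -> typing G M B.

Fixpoint fv (t : term) : list atom :=
  match t with
  | bvar _ => []
  | fvar x => [x]
  | univ _ => []
  | pi A B => fv A ++ fv B
  | app L M => fv L ++ fv M
  | lam A M => fv A ++ fv M
  end.

Fixpoint undup_aux (seen : list atom) (l : list atom) : list atom :=
  match l with
  | [] => []
  | x :: l' => if in_dec Nat.eq_dec x seen then undup_aux seen l'
               else x :: undup_aux (x :: seen) l'
  end.
Definition undup (l : list atom) : list atom := undup_aux [] l.

Definition entry_eq_dec : forall e f : atom * term, {e = f} + {e <> f}.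
Proof. decide equality; [apply term_eq_dec | apply Nat.eq_dec]. Defined.

Definition cunion (G1 G2 : ctx) : ctx :=
  G1 ++ filter (fun e => if in_dec entry_eq_dec e G1 then false else true) G2.

Fixpoint lookup (x : atom) (G : ctx) : option term :=
  match G with
  | [] => None
  | (y, A) :: G' => if Nat.eqb x y then Some A else lookup x G'
  end.

Definition entries (G : ctx) (xs : list atom) : ctx :=
  flat_map (fun x => match lookup x G with Some A => [(x, A)] | None => [] end) xs.

(* fvctx n G xs = FV(A_1) u ... u FV(A_n) u (x_1:A_1,...,x_n:A_n),
   computed with fuel n (length G suffices, since in a well-formed
   context the type of a variable only mentions earlier variables). *)
Fixpoint fvctx (n : nat) (G : ctx) (xs : list atom) : ctx :=
  match n with
  | 0 => []
  | S n' =>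
      let es := entries G xs in
      cunion (fold_left cunion (map (fun e => fvctx n' G (undup (fv (snd e)))) es) [])
             es
  end.

(* FV(M) relative to the derivation of G |- M : A *)
Definition FV (G : ctx) (M A : term) : ctx :=
  fvctx (length G) G (undup (fv M ++ fv A)).

(* Main.v *)
Require Import Defs.
From Stdlib Require Import List Arith PeanoNat Lia Classical.
Import ListNotations.
Import Defs.


Fixpoint lc_at (k : nat) (t : term) : Prop :=
  match t with
  | bvar n => n < k
  | fvar _ => True
  | univ _ => True
  | pi A B => lc_at k A /\ lc_at (S k) B
  | app L M => lc_at k L /\ lc_at k M
  | lam A M => lc_at k A /\ lc_at (S k) M
  end.

Fixpoint fsubst (x : atom) (u : term) (t : term) : term :=
  match t with
  | bvar n => bvar n
  | fvar y => if Nat.eqb y x then u else fvar y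
  | univ i => univ i
  | pi A B => pi (fsubst x u A) (fsubst x u B)
  | app L M => app (fsubst x u L) (fsubst x u M)
  | lam A M => lam (fsubst x u A) (fsubst x u M)
  end.

Ltac nat_cases := repeat match goal with
 | |- context [?a <=? ?b] => destruct (Nat.leb_spec a b)
 | |- context [?a =? ?b] => destruct (Nat.eqb_spec a b)
 | |- context [?a <? ?b] => destruct (Nat.ltb_spec a b)
 end.
Ltac bv := repeat (cbn [lift bsubst fsubst fv lc_at] in *; nat_cases); try (f_equal; lia); try lia.

Lemma lc_at_mono : forall t k k', k <= k' -> lc_at k t -> lc_at k' t.
Proof.
  induction t; simpl; intros k k' H H0; auto; try lia;
  (destruct H0 as [H1 H2]; split; [apply IHt1 with k; auto | first [apply IHt2 with (S k); [lia|assumption] | apply IHt2 with k; [lia|assumption]]]).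
Qed.

Lemma lift_0 : forall t c, lift 0 c t = t.
Proof. induction t; intros; bv; simpl; f_equal; auto. Qed.

Lemma lift_lc : forall t d c, lc_at c t -> lift d c t = t.
Proof. induction t; simpl; intros; bv; try (f_equal; intuition). Qed.

Lemma bsubst_lc : forall t k u, lc_at k t -> bsubst k u t = t.
Proof. induction t; simpl; intros; bv; try (f_equal; intuition). Qed.

Lemma lift_lift : forall t d d' c c', c <= c' -> c' <= c + d ->
  lift d' c' (lift d c t) = lift (d' + d) c t.
Proof.
  induction t; intros; bv; f_equal; auto; apply IHt2; lia.
Qed.

Lemma lift_lift_comm : forall t d d' c c', c' <= c ->
  lift d (c + d') (lift d' c' t) = lift d' c' (lift d c t).
Proof.
  induction t; intros; bv; f_equal; auto;
  replace (S (c + d')) with (S c + d') by lia; apply IHt2; lia.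
Qed.

Lemma bsubst_lift : forall t u k d c, c <= k -> k <= c + d ->
  bsubst k u (lift (S d) c t) = lift d c t.
Proof.
  induction t; intros; bv; f_equal; auto; apply IHt2; lia.
Qed.

Lemma lift_bsubst : forall t u d k c, k <= c ->
  lift d c (bsubst k u t) = bsubst k (lift d (c - k) u) (lift d (S c) t).
Proof.
  induction t; intros.
  - cbn [bsubst]. destruct (Nat.eqb_spec n k).
    + subst. bv. replace c with ((c - k) + k) at 1 by lia.
      apply lift_lift_comm; lia.
    + bv.
  - reflexivity.
  - reflexivity.
  - simpl. f_equal; auto. rewrite IHt2 by lia. f_equal.
  - simpl. f_equal; auto.
  - simpl. f_equal; auto. rewrite IHt2 by lia. f_equal.
Qed.

Lemma bsubst_lift_comm : forall t u k d c, c <= k ->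
  bsubst (k + d) u (lift d c t) = lift d c (bsubst k u t).
Proof.
  induction t; intros.
  - simpl. destruct (Nat.leb_spec c n).
    + simpl. destruct (Nat.eqb_spec n k).
      * subst. rewrite Nat.eqb_refl. rewrite lift_lift by lia. f_equal; lia.
      * bv.
    + bv.
  - reflexivity.
  - reflexivity.
  - simpl. f_equal; auto. replace (S (k + d)) with (S k + d) by lia. apply IHt2; lia.
  - simpl. f_equal; auto.
  - simpl. f_equal; auto. replace (S (k + d)) with (S k + d) by lia. apply IHt2; lia.
Qed.

Lemma bsubst_bsubst : forall t u v k k', k' <= k ->
  bsubst k u (bsubst k' v t) = bsubst k' (bsubst (k - k') u v) (bsubst (S k) u t).
Proof.
  induction t; intros.
  - cbn [bsubst]. destruct (Nat.eqb_spec n k').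
    + subst. bv. replace k with ((k - k') + k') at 1 by lia.
      rewrite bsubst_lift_comm by lia. reflexivity.
    + bv; subst; try (rewrite bsubst_lift by lia; f_equal; lia).
  - reflexivity.
  - reflexivity.
  - simpl. f_equal; auto. rewrite IHt2 by lia. f_equal.
  - simpl. f_equal; auto.
  - simpl. f_equal; auto. rewrite IHt2 by lia. f_equal.
Qed.

Lemma bsubst_var_lift : forall W k, bsubst k (bvar 0) (lift 1 (S k) W) = W.
Proof.
  induction W; intros; bv; simpl; f_equal; auto.
Qed.

Lemma lift_inj : forall t1 t2 d c, lift d c t1 = lift d c t2 -> t1 = t2.
Proof.
  induction t1; destruct t2; intros d c H; cbn [lift] in H; revert H; nat_cases; intro Hq;
  try discriminate; inversion Hq; subst; f_equal; eauto; lia.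
Qed.

Lemma lc_bsubst_inv : forall t k u, lc_at k (bsubst k u t) -> lc_at (S k) t.
Proof.
  induction t; simpl; intros k u H; try tauto.
  - revert H; bv.
  - destruct H; split; eauto.
  - destruct H; split; eauto.
  - destruct H; split; eauto.
Qed.

Lemma lc_bsubst : forall t k u, lc_at (S k) t -> lc_at 0 u -> lc_at k (bsubst k u t).
Proof.
  induction t; simpl; intros k u H Hu; try tauto.
  - bv. rewrite lift_lc by (eapply lc_at_mono; [|eauto]; lia).
    eapply lc_at_mono; [|eauto]; lia.
  - destruct H; split; eauto.
  - destruct H; split; eauto.
  - destruct H; split; eauto.
Qed.

Lemma fsubst_lift : forall t x u d c, lc_at 0 u ->
  fsubst x u (lift d c t) = lift d c (fsubst x u t).
Proof.
  induction t; simpl; intros; try (f_equal; auto; fail).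
  - bv.
  - destruct (Nat.eqb_spec x x0); auto. rewrite lift_lc; auto.
    eapply lc_at_mono; [|eauto]; lia.
Qed.

Lemma fsubst_bsubst : forall t x u v k, lc_at 0 u ->
  fsubst x u (bsubst k v t) = bsubst k (fsubst x u v) (fsubst x u t).
Proof.
  induction t; simpl; intros; try (f_equal; auto; fail).
  - bv. apply fsubst_lift; auto.
  - destruct (Nat.eqb_spec x x0); auto. rewrite bsubst_lc; auto.
    eapply lc_at_mono; [|eauto]; lia.
Qed.

Lemma fsubst_fresh : forall t x u, ~ In x (fv t) -> fsubst x u t = t.
Proof.
  induction t; simpl; intros; auto.
  - destruct (Nat.eqb_spec x x0); subst; auto. tauto.
  - rewrite in_app_iff in H. f_equal; auto.
  - rewrite in_app_iff in H. f_equal; auto.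
  - rewrite in_app_iff in H. f_equal; auto.
Qed.

Lemma fsubst_open_var : forall t x u k, lc_at 0 u -> ~ In x (fv t) ->
  fsubst x u (bsubst k (fvar x) t) = bsubst k u t.
Proof.
  induction t; simpl; intros; auto.
  - bv; simpl; try rewrite Nat.eqb_refl; auto.
    symmetry; apply lift_lc; eapply lc_at_mono; [|eauto]; lia.
  - destruct (Nat.eqb_spec x x0); subst; auto. tauto.
  - rewrite in_app_iff in H0. f_equal; auto.
  - rewrite in_app_iff in H0. f_equal; auto.
  - rewrite in_app_iff in H0. f_equal; auto.
Qed.

Lemma fsubst_back : forall t x z, ~ In z (fv t) ->
  fsubst z (fvar x) (fsubst x (fvar z) t) = t.
Proof.
  induction t; simpl; intros; auto.
  - destruct (Nat.eqb_spec x x0); subst; simpl.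
    + rewrite Nat.eqb_refl; auto.
    + destruct (Nat.eqb_spec x z); subst; auto. tauto.
  - rewrite in_app_iff in H. f_equal; auto.
  - rewrite in_app_iff in H. f_equal; auto.
  - rewrite in_app_iff in H. f_equal; auto.
Qed.

Lemma fv_lift : forall t d c, fv (lift d c t) = fv t.
Proof. induction t; simpl; intros; bv; f_equal; auto. Qed.

Lemma fv_bsubst : forall t k u z, In z (fv (bsubst k u t)) -> In z (fv u) \/ In z (fv t).
Proof.
  induction t; simpl; intros k u z H; auto.
  - revert H; bv; intro Hq; try rewrite fv_lift in Hq; auto.
  - rewrite in_app_iff in *. destruct H as [H|H]; [destruct (IHt1 _ _ _ H)|destruct (IHt2 _ _ _ H)]; tauto.
  - rewrite in_app_iff in *. destruct H as [H|H]; [destruct (IHt1 _ _ _ H)|destruct (IHt2 _ _ _ H)]; tauto.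
  - rewrite in_app_iff in *. destruct H as [H|H]; [destruct (IHt1 _ _ _ H)|destruct (IHt2 _ _ _ H)]; tauto.
Qed.

Lemma fv_bsubst2 : forall t k u z, In z (fv t) -> In z (fv (bsubst k u t)).
Proof.
  induction t; simpl; intros k u z H; try tauto; rewrite in_app_iff in *; intuition.
Qed.

Lemma fv_fsubst : forall t a u z, In z (fv (fsubst a u t)) -> In z (fv u) \/ (In z (fv t) /\ z <> a).
Proof.
  induction t; simpl; intros a u z H; auto.
  - destruct (Nat.eqb_spec x a); subst; auto. simpl in H. destruct H; [|tauto]. subst. auto.
  - rewrite in_app_iff in *. destruct H as [H|H]; [destruct (IHt1 _ _ _ H)|destruct (IHt2 _ _ _ H)]; tauto.
  - rewrite in_app_iff in *. destruct H as [H|H]; [destruct (IHt1 _ _ _ H)|destruct (IHt2 _ _ _ H)]; tauto.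
  - rewrite in_app_iff in *. destruct H as [H|H]; [destruct (IHt1 _ _ _ H)|destruct (IHt2 _ _ _ H)]; tauto.
Qed.
#[export] Hint Constructors reds red1 : core.

Lemma reds_trans : forall s t u, reds s t -> reds t u -> reds s u.
Proof. intros s t u H; induction H; eauto. Qed.

Lemma reds1 : forall s t, red1 s t -> reds s t.
Proof. eauto. Qed.

Lemma reds_pi : forall A A' B B', reds A A' -> reds B B' -> reds (pi A B) (pi A' B').
Proof.
  intros A A' B B' H; induction H; intros.
  - induction H; eauto .
  - eauto .
Qed.

Lemma reds_app : forall A A' B B', reds A A' -> reds B B' -> reds (app A B) (app A' B').
Proof.
  intros A A' B B' H; induction H; intros.
  - induction H; eauto .
  - eauto .
Qed.

Lemma reds_lam : forall A A' B B', reds A A' -> reds B B' -> reds (lam A B) (lam A' B').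
Proof.
  intros A A' B B' H; induction H; intros.
  - induction H; eauto .
  - eauto .
Qed.

Lemma red1_lift : forall t t', red1 t t' -> forall d c, red1 (lift d c t) (lift d c t').
Proof.
  induction 1; intros; simpl; try (constructor; auto; fail).
  unfold inst. rewrite lift_bsubst by lia. rewrite Nat.sub_0_r. constructor.
Qed.

Lemma reds_lift : forall t t', reds t t' -> forall d c, reds (lift d c t) (lift d c t').
Proof. induction 1; intros; eauto using red1_lift. Qed.

Lemma red1_bsubst : forall t t', red1 t t' -> forall k u, red1 (bsubst k u t) (bsubst k u t').
Proof.
  induction 1; intros; simpl; try (constructor; auto; fail).
  unfold inst. rewrite bsubst_bsubst by lia. rewrite Nat.sub_0_r. constructor.
Qed.

Lemma reds_bsubst : forall t t', reds t t' -> forall k u, reds (bsubst k u t) (bsubst k u t').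
Proof. induction 1; intros; eauto using red1_bsubst. Qed.

Lemma reds_bsubst_arg : forall t k u u', reds u u' -> reds (bsubst k u t) (bsubst k u' t).
Proof.
  induction t; intros; simpl; auto using reds_pi, reds_app, reds_lam, reds.
  destruct (n =? k); [apply reds_lift; auto | destruct (k <? n); apply reds_refl].
  all: try (apply reds_pi || apply reds_app || apply reds_lam); auto.
  all: apply reds_refl.
Qed.

Lemma reds_bsubst2 : forall t t' k u u', reds t t' -> reds u u' ->
  reds (bsubst k u t) (bsubst k u' t').
Proof.
  intros. eapply reds_trans; [apply reds_bsubst; eauto| apply reds_bsubst_arg; auto].
Qed.

Lemma red1_fsubst : forall t t', red1 t t' -> forall x u, lc_at 0 u ->
  red1 (fsubst x u t) (fsubst x u t').
Proof.
  induction 1; intros; simpl; try (constructor; auto; fail).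
  unfold inst. rewrite fsubst_bsubst by auto. constructor.
Qed.

Lemma reds_fsubst : forall t t', reds t t' -> forall x u, lc_at 0 u ->
  reds (fsubst x u t) (fsubst x u t').
Proof. induction 1; intros; eauto using red1_fsubst. Qed.

Inductive par : term -> term -> Prop :=
  | p_bvar n : par (bvar n) (bvar n)
  | p_fvar x : par (fvar x) (fvar x)
  | p_univ i : par (univ i) (univ i)
  | p_pi A A' B B' : par A A' -> par B B' -> par (pi A B) (pi A' B')
  | p_app A A' B B' : par A A' -> par B B' -> par (app A B) (app A' B')
  | p_lam A A' B B' : par A A' -> par B B' -> par (lam A B) (lam A' B')
  | p_beta A N N' M M' : par N N' -> par M M' -> par (app (lam A N) M) (inst N' M').

Lemma par_refl : forall t, par t t.
Proof. induction t; constructor; auto. Qed.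

Lemma red1_par : forall t t', red1 t t' -> par t t'.
Proof. induction 1; constructor; auto using par_refl. Qed.

Lemma par_reds : forall t t', par t t' -> reds t t'.
Proof.
  induction 1; auto using reds_pi, reds_app, reds_lam.
  eapply reds_trans. apply reds_app; [apply reds_lam|]; eauto.
  apply reds1. constructor.
Qed.

Lemma par_lift : forall t t', par t t' -> forall d c, par (lift d c t) (lift d c t').
Proof.
  induction 1; intros; simpl; try (constructor; auto; fail).
  - destruct (c <=? n); constructor.
  - unfold inst. rewrite lift_bsubst by lia. rewrite Nat.sub_0_r. constructor; auto.
Qed.

Lemma par_bsubst : forall t t', par t t' -> forall u u' k, par u u' ->
  par (bsubst k u t) (bsubst k u' t').
Proof.
  induction 1; intros; simpl; try (constructor; auto; fail).
  - destruct (n =? k). apply par_lift; auto. destruct (k <? n); constructor.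
  - unfold inst. rewrite bsubst_bsubst by lia. rewrite Nat.sub_0_r. constructor; auto.
Qed.

Fixpoint cd (t : term) : term :=
  match t with
  | app (lam A N) M => inst (cd N) (cd M)
  | app L M => app (cd L) (cd M)
  | pi A B => pi (cd A) (cd B)
  | lam A M => lam (cd A) (cd M)
  | t => t
  end.

Lemma par_cd : forall t t', par t t' -> par t' (cd t).
Proof.
  induction 1; simpl; try (constructor; auto; fail).
  - destruct A; try (constructor; auto; fail).
    inversion H; subst. simpl in IHpar1. inversion IHpar1; subst.
    constructor; auto.
  - unfold inst. apply par_bsubst; auto.
Qed.

Lemma strip : forall t t2, reds t t2 -> forall t1, par t t1 ->
  exists t3, reds t1 t3 /\ par t2 t3.
Proof.
  induction 1; intros.
  - exists t1. split; auto.
  - apply red1_par in H.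
    destruct (IHreds (cd s)) as [t3 [H2 H3]]. apply par_cd; auto.
    exists t3. split; auto. eapply reds_trans; [|eauto]. apply par_reds. apply par_cd; auto.
Qed.

Lemma CR : forall t t1 t2, reds t t1 -> reds t t2 -> exists t3, reds t1 t3 /\ reds t2 t3.
Proof.
  intros t t1 t2 H; revert t2; induction H as [x|s m u Hsm Hmu IH]; intros t2 H2.
  - exists t2; auto.
  - destruct (strip _ _ H2 m) as [t3 [H3 H4]]. apply red1_par; auto.
    destruct (IH t3 H3) as [t4 [H5 H6]].
    exists t4. split; auto. eapply reds_trans; [apply par_reds|]; eauto.
Qed.

Lemma reds_pi_inv : forall A B X, reds (pi A B) X ->
  exists A' B', X = pi A' B' /\ reds A A' /\ reds B B'.
Proof.
  intros A B X H; remember (pi A B) as P; revert A B HeqP; induction H; intros; subst.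
  - eauto.
  - inversion H; subst.
    + edestruct IHreds as [A2 [B2 [? [? ?]]]]; [reflexivity|]. subst; do 2 eexists; split; [reflexivity|split]; eauto.
    + edestruct IHreds as [A2 [B2 [? [? ?]]]]; [reflexivity|]. subst; do 2 eexists; split; [reflexivity|split]; eauto.
Qed.

Lemma reds_lam_inv : forall A B X, reds (lam A B) X ->
  exists A' B', X = lam A' B' /\ reds A A' /\ reds B B'.
Proof.
  intros A B X H; remember (lam A B) as P; revert A B HeqP; induction H; intros; subst.
  - eauto.
  - inversion H; subst.
    + edestruct IHreds as [A2 [B2 [? [? ?]]]]; [reflexivity|]. subst; do 2 eexists; split; [reflexivity|split]; eauto.
    + edestruct IHreds as [A2 [B2 [? [? ?]]]]; [reflexivity|]. subst; do 2 eexists; split; [reflexivity|split]; eauto.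
Qed.

Lemma reds_univ_inv : forall i X, reds (univ i) X -> X = univ i.
Proof.
  intros i X H; remember (univ i) as P; induction H; subst; auto. inversion H.
Qed.

Lemma reds_fvar_inv : forall x X, reds (fvar x) X -> X = fvar x.
Proof.
  intros i X H; remember (fvar i) as P; induction H; subst; auto. inversion H.
Qed.

Lemma reds_app_inv : forall P Q X, reds (app P Q) X ->
  (exists P' Q', X = app P' Q' /\ reds P P' /\ reds Q Q') \/ (exists A N, reds P (lam A N)).
Proof.
  intros P Q X H; remember (app P Q) as T; revert P Q HeqT; induction H; intros; subst.
  - left; do 2 eexists; eauto.
  - inversion H; subst.
    + right. eauto.
    + edestruct IHreds as [[P2 [Q2 [? [? ?]]]]|[A [N ?]]]; [reflexivity| |].
      * subst. left. do 2 eexists; split; [reflexivity|split]; eauto.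
      * right. do 2 eexists; eauto.
    + edestruct IHreds as [[P2 [Q2 [? [? ?]]]]|[A [N ?]]]; [reflexivity| |].
      * subst. left. do 2 eexists; split; [reflexivity|split]; eauto.
      * right. eauto.
Qed.

Lemma red1_lift_refl : forall t d c s, red1 (lift d c t) s ->
  exists t', s = lift d c t' /\ red1 t t'.
Proof.
  induction t; intros d c s H; simpl in H.
  - destruct (c <=? n); inversion H.
  - inversion H.
  - inversion H.
  - inversion H; subst.
    + destruct (IHt1 _ _ _ H3) as [t' [? ?]]. subst. exists (pi t' t2). simpl. split; auto.
    + destruct (IHt2 _ _ _ H3) as [t' [? ?]]. subst. exists (pi t1 t'). simpl. split; auto.
  - inversion H; subst.
    + destruct t1; simpl in H1; try discriminate. destruct (c <=? n); discriminate.
      inversion H1; subst. exists (inst t1_2 t2). unfold inst.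
      rewrite lift_bsubst by lia. rewrite Nat.sub_0_r. split; auto.
    + destruct (IHt1 _ _ _ H3) as [t' [? ?]]. subst. exists (app t' t2). simpl. split; auto.
    + destruct (IHt2 _ _ _ H3) as [t' [? ?]]. subst. exists (app t1 t'). simpl. split; auto.
  - inversion H; subst.
    + destruct (IHt1 _ _ _ H3) as [t' [? ?]]. subst. exists (lam t' t2). simpl. split; auto.
    + destruct (IHt2 _ _ _ H3) as [t' [? ?]]. subst. exists (lam t1 t'). simpl. split; auto.
Qed.

Lemma reds_lift_refl : forall t d c s, reds (lift d c t) s ->
  exists t', s = lift d c t' /\ reds t t'.
Proof.
  intros t d c s H; remember (lift d c t) as T; revert t HeqT; induction H; intros; subst.
  - eauto.
  - destruct (red1_lift_refl _ _ _ _ H) as [t1 [? ?]]. subst.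
    destruct (IHreds t1) as [t2 [? ?]]; auto. subst. eauto.
Qed.

Lemma red1_open_refl : forall t k y s, red1 (bsubst k (fvar y) t) s ->
  exists t', s = bsubst k (fvar y) t' /\ red1 t t'.
Proof.
  induction t; intros k y s H; simpl in H.
  - destruct (n =? k); [|destruct (k <? n)]; inversion H.
  - inversion H.
  - inversion H.
  - inversion H; subst.
    + destruct (IHt1 _ _ _ H3) as [t' [? ?]]. subst. exists (pi t' t2). simpl. split; auto.
    + destruct (IHt2 _ _ _ H3) as [t' [? ?]]. subst. exists (pi t1 t'). simpl. split; auto.
  - inversion H; subst.
    + destruct t1; simpl in H1; try discriminate.
      destruct (n =? k); [|destruct (k <? n)]; discriminate.
      inversion H1; subst. exists (inst t1_2 t2). unfold inst.
      rewrite (bsubst_bsubst t1_2 (fvar y) t2 k 0) by lia. rewrite Nat.sub_0_r. split; auto.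
    + destruct (IHt1 _ _ _ H3) as [t' [? ?]]. subst. exists (app t' t2). simpl. split; auto.
    + destruct (IHt2 _ _ _ H3) as [t' [? ?]]. subst. exists (app t1 t'). simpl. split; auto.
  - inversion H; subst.
    + destruct (IHt1 _ _ _ H3) as [t' [? ?]]. subst. exists (lam t' t2). simpl. split; auto.
    + destruct (IHt2 _ _ _ H3) as [t' [? ?]]. subst. exists (lam t1 t'). simpl. split; auto.
Qed.

Lemma reds_open_refl : forall t k y s, reds (bsubst k (fvar y) t) s ->
  exists t', s = bsubst k (fvar y) t' /\ reds t t'.
Proof.
  intros t k y s H; remember (bsubst k (fvar y) t) as T; revert t HeqT; induction H; intros; subst.
  - eauto.
  - destruct (red1_open_refl _ _ _ _ H) as [t1 [? ?]]. subst.
    destruct (IHreds t1) as [t2 [? ?]]; auto. subst. eauto.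
Qed.

Lemma red1_fv : forall t t', red1 t t' -> forall z, In z (fv t') -> In z (fv t).
Proof.
  induction 1; simpl; intros z Hz; rewrite ?in_app_iff in *.
  1: { unfold inst in Hz. apply fv_bsubst in Hz. tauto. }
  all: destruct Hz; auto; tauto.
Qed.

Lemma reds_fv : forall t t', reds t t' -> forall z, In z (fv t') -> In z (fv t).
Proof. induction 1; eauto using red1_fv. Qed.

Definition J X Y := exists Z, reds X Z /\ reds Y Z.

Lemma J_refl : forall X, J X X.
Proof. intros; exists X; auto. Qed.
Lemma J_sym : forall X Y, J X Y -> J Y X.
Proof. intros X Y [Z [? ?]]; exists Z; auto. Qed.
Lemma J_trans : forall X Y Z, J X Y -> J Y Z -> J X Z.
Proof.
  intros X Y Z [A [H1 H2]] [B [H3 H4]].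
  destruct (CR _ _ _ H2 H3) as [C [? ?]]. exists C; split; eapply reds_trans; eauto.
Qed.
Lemma J_reds : forall X Y, reds X Y -> J X Y.
Proof. intros; exists Y; auto. Qed.

Definition rigid X := forall A W, ~ reds X (lam A W).

Lemma rigid_reds : forall X Y, rigid X -> reds X Y -> rigid Y.
Proof. intros X Y H H0 A W H1. apply (H A W). eapply reds_trans; eauto. Qed.

Lemma rigid_J : forall X Y, rigid X -> J X Y -> rigid Y.
Proof.
  intros X Y H [Z [H1 H2]] A W H3.
  destruct (CR _ _ _ H2 H3) as [C [H4 H5]].
  destruct (reds_lam_inv _ _ _ H5) as [A' [W' [? _]]]. subst.
  apply (H A' W'). eapply reds_trans; eauto.
Qed.

Lemma rigid_pi : forall A B, rigid (pi A B).
Proof. intros A B A' W H. destruct (reds_pi_inv _ _ _ H) as [? [? [? _]]]. discriminate. Qed.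

Lemma rigid_univ : forall i, rigid (univ i).
Proof. intros i A' W H. apply reds_univ_inv in H. discriminate. Qed.

Lemma lift_lam_refl : forall Y A N, reds (lift 1 0 Y) (lam A N) -> exists A' N', reds Y (lam A' N').
Proof.
  intros Y A N H. apply reds_lift_refl in H. destruct H as [t' [H3 H4]].
  destruct t'; simpl in H3; try discriminate. inversion H3; subst. eauto.
Qed.

Lemma rigid_applift : forall X, rigid X -> rigid (app (lift 1 0 X) (bvar 0)).
Proof.
  intros X H A W H1. apply reds_app_inv in H1.
  destruct H1 as [[? [? [? _]]]|[A' [N H2]]]; [discriminate|].
  apply lift_lam_refl in H2. destruct H2 as [? [? ?]]. eapply H; eauto.
Qed.

Lemma J_applift_inv : forall X Y, rigid X -> rigid Y ->
  J (app (lift 1 0 X) (bvar 0)) (app (lift 1 0 Y) (bvar 0)) -> J X Y.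
Proof.
  intros X Y HX HY [Z [H1 H2]].
  apply reds_app_inv in H1. destruct H1 as [[P1 [Q1 [? [H3 _]]]]|[A [N H3]]].
  2:{ exfalso. apply lift_lam_refl in H3. destruct H3 as [? [? ?]]. eapply HX; eauto. }
  subst. apply reds_app_inv in H2. destruct H2 as [[P2 [Q2 [H4 [H5 _]]]]|[A [N H3']]].
  2:{ exfalso. apply lift_lam_refl in H3'. destruct H3' as [? [? ?]]. eapply HY; eauto. }
  inversion H4; subst.
  apply reds_lift_refl in H3. destruct H3 as [t1 [? ?]]. subst.
  apply reds_lift_refl in H5. destruct H5 as [t2 [Ht2 ?]].
  apply lift_inj in Ht2. subst. exists t2. auto.
Qed.

Inductive equiv_s : nat -> term -> term -> Prop :=
  | es_join L M N : reds L N -> reds M N -> equiv_s 1 L M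
  | es_eta1 n L M A L' M' :
      reds L (lam A L') -> reds M M' ->
      equiv_s n L' (app (lift 1 0 M') (bvar 0)) -> equiv_s (S n) L M
  | es_eta2 n L M A M' L' :
      reds L L' -> reds M (lam A M') ->
      equiv_s n (app (lift 1 0 L') (bvar 0)) M' -> equiv_s (S n) L M.

Lemma equiv_sized : forall L M, equiv L M -> exists n, equiv_s n L M.
Proof.
  induction 1.
  - exists 1. econstructor; eauto.
  - destruct IHequiv as [n Hn]. exists (S n). econstructor; eauto.
  - destruct IHequiv as [n Hn]. exists (S n). eapply es_eta2; eauto.
Qed.

Inductive chain : nat -> term -> term -> Prop :=
  | ch_refl X : chain 0 X X
  | ch_J X Y Z n : J X Y -> chain n Y Z -> chain n X Z
  | ch_eq X Y Z s n : equiv_s s X Y -> chain n Y Z -> chain (s + n) X Z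
  | ch_eqr X Y Z s n : equiv_s s Y X -> chain n Y Z -> chain (s + n) X Z.

Lemma chain_app : forall n X Y, chain n X Y -> forall m Z, chain m Y Z -> chain (n + m) X Z.
Proof.
  induction 1; intros; simpl; auto.
  - eapply ch_J; eauto.
  - rewrite <- Nat.add_assoc. eapply ch_eq; eauto.
  - rewrite <- Nat.add_assoc. eapply ch_eqr; eauto.
Qed.

Lemma chain_sym : forall n X Y, chain n X Y -> chain n Y X.
Proof.
  induction 1.
  - constructor.
  - replace n with (n + 0) by lia. eapply chain_app; eauto.
    apply ch_J with X; [apply J_sym; auto | constructor].
  - replace (s + n) with (n + (s + 0)) by lia. eapply chain_app; eauto.
    eapply ch_eqr; eauto. constructor.
  - replace (s + n) with (n + (s + 0)) by lia. eapply chain_app; eauto.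
    eapply ch_eq; eauto. constructor.
Qed.

Definition lamred Y := exists A W, reds Y (lam A W).

Lemma not_rigid : forall Y, ~ rigid Y -> lamred Y.
Proof.
  intros Y H. apply NNPP. intro H1. apply H. intros A W H2. apply H1. exists A, W; auto.
Qed.

Lemma lam_reds_J : forall Y Y' A W A2 W2, J Y Y' -> reds Y (lam A W) -> reds Y' (lam A2 W2) -> J W W2.
Proof.
  intros. assert (J (lam A W) (lam A2 W2)).
  { eapply J_trans; [apply J_sym, J_reds; eauto|]. eapply J_trans; eauto. apply J_reds; auto. }
  destruct H2 as [Z [H3 H4]].
  apply reds_lam_inv in H3. destruct H3 as [? [W3 [? [? ?]]]]. subst.
  apply reds_lam_inv in H4. destruct H4 as [? [W4 [? [? ?]]]]. inversion H2; subst.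
  exists W4; auto.
Qed.

Lemma reduct_lam : forall Y M' A2 W2, reds Y M' -> reds Y (lam A2 W2) ->
  exists A3 W3, reds M' (lam A3 W3) /\ reds W2 W3 /\ reds Y (lam A3 W3).
Proof.
  intros. destruct (CR _ _ _ H H0) as [Z [H1 H2]].
  apply reds_lam_inv in H2. destruct H2 as [A3 [W3 [? [? ?]]]]. subst.
  exists A3, W3. split; auto. split; auto. eapply reds_trans; [eauto| apply reds_lam; auto].
Qed.

Lemma applift_red : forall M' A W, reds M' (lam A W) -> reds (app (lift 1 0 M') (bvar 0)) W.
Proof.
  intros. eapply reds_trans. apply reds_app. apply reds_lift; eauto. apply reds_refl.
  simpl. apply reds1. replace W with (inst (lift 1 1 W) (bvar 0)) at 2.
  constructor. unfold inst. apply bsubst_var_lift.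
Qed.

Lemma applift_J : forall X Y, J X Y -> J (app (lift 1 0 X) (bvar 0)) (app (lift 1 0 Y) (bvar 0)).
Proof.
  intros X Y [Z [H1 H2]]. exists (app (lift 1 0 Z) (bvar 0)).
  split; apply reds_app; auto using reds_lift.
Qed.

Definition state (X0 : term) (b : nat) (Y : term) :=
  (rigid Y /\ J X0 Y) \/
  (lamred Y /\ forall A W, reds Y (lam A W) ->
      exists c, c < b /\ chain c W (app (lift 1 0 X0) (bvar 0))).

Lemma state_mono : forall X0 b b' Y, b <= b' -> state X0 b Y -> state X0 b' Y.
Proof.
  intros X0 b b' Y Hb [H|[H1 H2]]; [left; auto|right; split; auto].
  intros A W H. destruct (H2 A W H) as [c [? ?]]. exists c. split; auto. lia.
Qed.

Lemma state_J : forall X0 b Y Y', J Y Y' -> state X0 b Y -> state X0 b Y'.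
Proof.
  intros X0 b Y Y' HJ [[H1 H2]|[[A [W H1]] H2]].
  - left. split. eapply rigid_J; eauto. eapply J_trans; eauto.
  - right. split.
    + destruct HJ as [N [H3 H4]]. destruct (reduct_lam _ _ _ _ H3 H1) as [A3 [W3 [? [? ?]]]].
      exists A3, W3. eapply reds_trans; eauto.
    + intros A2 W2 H3. destruct (H2 A W H1) as [c [Hc Hch]].
      exists c. split; auto. eapply ch_J; [|eauto]. apply J_sym. eapply lam_reds_J; eauto.
Qed.

Section G.
Variable n : nat.
Hypothesis IHn : forall m, m < n -> forall X Z, chain m X Z -> rigid X -> rigid Z -> J X Z.
Variable X0 : term.
Hypothesis HX0 : rigid X0.

Lemma rigid_close : forall Y M' W c m, reds Y M' -> rigid Y ->
  chain c (app (lift 1 0 X0) (bvar 0)) W -> equiv_s m W (app (lift 1 0 M') (bvar 0)) ->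
  c + m < n -> J X0 Y.
Proof.
  intros. assert (rigid M') by (eapply rigid_reds; eauto).
  assert (J (app (lift 1 0 X0) (bvar 0)) (app (lift 1 0 M') (bvar 0))).
  { apply (IHn (c + (m + 0))); try lia; auto using rigid_applift.
    eapply chain_app; eauto. eapply ch_eq; eauto. constructor. }
  apply J_applift_inv in H5; auto. eapply J_trans; eauto. apply J_sym, J_reds; auto.
Qed.

Lemma rigid_close2 : forall Y M' W c m, reds Y M' -> rigid Y ->
  chain c (app (lift 1 0 X0) (bvar 0)) W -> equiv_s m (app (lift 1 0 M') (bvar 0)) W ->
  c + m < n -> J X0 Y.
Proof.
  intros. assert (rigid M') by (eapply rigid_reds; eauto).
  assert (J (app (lift 1 0 X0) (bvar 0)) (app (lift 1 0 M') (bvar 0))).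
  { apply (IHn (c + (m + 0))); try lia; auto using rigid_applift.
    eapply chain_app; eauto. eapply ch_eqr; eauto. constructor. }
  apply J_applift_inv in H5; auto. eapply J_trans; eauto. apply J_sym, J_reds; auto.
Qed.

Lemma state_eq : forall s Y Y' b, equiv_s s Y Y' -> b + s <= n ->
  state X0 b Y -> state X0 (b + s) Y'.
Proof.
  intros s Y Y' b He; revert b.
  destruct He as [Y Y' N HL HM | n0 Y Y' A W M' HL HM He' | n0 Y Y' A W' L' HL HM He'];
  intros b Hb Hs.
  - eapply state_mono; [|eapply state_J; eauto]. lia. exists N; auto.
  -
    destruct Hs as [[H1 _]|[_ H2]]; [exfalso; eapply H1; eauto|].
    destruct (H2 _ _ HL) as [c [Hc Hch]].
    destruct (classic (rigid Y')) as [HR|HR].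
    + left. split; auto. eapply rigid_close; eauto. apply chain_sym; eauto. lia.
    + right. split. apply not_rigid; auto.
      intros A2 W2 H3. destruct (reduct_lam _ _ _ _ HM H3) as [A3 [W3 [H4 [H5 _]]]].
      exists (n0 + c). split. lia.
      apply ch_J with W3. apply J_reds; auto.
      apply ch_J with (app (lift 1 0 M') (bvar 0)). apply J_sym, J_reds. eapply applift_red; eauto.
      eapply ch_eqr; eauto.
  -
    right. split. exists A, W'; auto.
    intros A2 W2 H3. assert (HJ : J W2 W') by (eapply lam_reds_J; [apply J_refl| |]; eauto).
    destruct Hs as [[H1 H2]|[[A1 [W1 H1]] H2]].
    + exists (n0 + 0). split. lia.
      apply ch_J with W'; auto. eapply ch_eqr; eauto.
      apply ch_J with (app (lift 1 0 X0) (bvar 0)); [|constructor].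
      apply applift_J. apply J_sym. eapply J_trans; eauto. apply J_reds; auto.
    + destruct (reduct_lam _ _ _ _ HL H1) as [A3 [W3 [H4 [H5 H6]]]].
      destruct (H2 _ _ H6) as [c [Hc Hch]].
      exists (n0 + c). split. lia.
      apply ch_J with W'; auto. eapply ch_eqr; eauto.
      apply ch_J with W3; auto. apply J_reds. eapply applift_red; eauto.
Qed.

Lemma state_eqr : forall s Y Y' b, equiv_s s Y' Y -> b + s <= n ->
  state X0 b Y -> state X0 (b + s) Y'.
Proof.
  intros s Y Y' b He; revert b.
  destruct He as [Y' Y N HL HM | n0 Y' Y A W0 M' HL HM He' | n0 Y' Y A W L' HL HM He'];
  intros b Hb Hs.
  - eapply state_mono; [|eapply state_J; eauto]. lia. exists N; auto.
  -
    right. split. exists A, W0; auto.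
    intros A2 W2 H3. assert (HJ : J W2 W0) by (eapply lam_reds_J; [apply J_refl| |]; eauto).
    destruct Hs as [[H1 H2]|[[A1 [W1 H1]] H2]].
    + exists (n0 + 0). split. lia.
      apply ch_J with W0; auto. eapply ch_eq; eauto.
      apply ch_J with (app (lift 1 0 X0) (bvar 0)); [|constructor].
      apply applift_J. apply J_sym. eapply J_trans; eauto. apply J_reds; auto.
    + destruct (reduct_lam _ _ _ _ HM H1) as [A3 [W3 [H4 [H5 H6]]]].
      destruct (H2 _ _ H6) as [c [Hc Hch]].
      exists (n0 + c). split. lia.
      apply ch_J with W0; auto. eapply ch_eq; eauto.
      apply ch_J with W3; auto. apply J_reds. eapply applift_red; eauto.
  -
    destruct Hs as [[H1 _]|[_ H2]]; [exfalso; eapply H1; eauto|].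
    destruct (H2 _ _ HM) as [c [Hc Hch]].
    destruct (classic (rigid Y')) as [HR|HR].
    + left. split; auto. eapply rigid_close2; eauto. apply chain_sym; eauto. lia.
    + right. split. apply not_rigid; auto.
      intros A2 W2 H3. destruct (reduct_lam _ _ _ _ HL H3) as [A3 [W3 [H4 [H5 _]]]].
      exists (n0 + c). split. lia.
      apply ch_J with W3. apply J_reds; auto.
      apply ch_J with (app (lift 1 0 L') (bvar 0)). apply J_sym, J_reds. eapply applift_red; eauto.
      eapply ch_eq; eauto.
Qed.

Lemma G_inner : forall m Y Z, chain m Y Z -> forall b, b + m <= n -> state X0 b Y -> rigid Z -> J X0 Z.
Proof.
  induction 1; intros b Hb Hs HZ.
  - destruct Hs as [[_ H]|[[A [W H]] _]]; auto. exfalso; eapply HZ; eauto.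
  - eapply IHchain; eauto. eapply state_J; eauto.
  - apply (IHchain (b + s)). lia. eapply state_eq; eauto. lia. auto.
  - apply (IHchain (b + s)). lia. eapply state_eqr; eauto. lia. auto.
Qed.
End G.

Lemma lemmaG : forall n X Z, chain n X Z -> rigid X -> rigid Z -> J X Z.
Proof.
  intro n. induction n as [n IH] using (well_founded_induction lt_wf).
  intros X Z Hc HX HZ. eapply (G_inner n IH X HX n X Z Hc 0); auto.
  left. split; auto. apply J_refl.
Qed.

Scheme wf_mut := Induction for wf Sort Prop with typing_mut := Induction for typing Sort Prop.

Definition fresh (l : list atom) : atom := S (fold_right max 0 l).
Lemma fresh_not_in : forall l, ~ In (fresh l) l.
Proof.
  assert (forall l x, In x l -> x <= fold_right max 0 l).
  { induction l; simpl; intros; [tauto|]. destruct H; subst; [lia|]. specialize (IHl _ H). lia. }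
  intros l H1. apply H in H1. unfold fresh in H1. lia.
Qed.

Lemma app_last_decomp : forall (G G1 G2 : ctx) x A y B,
  G ++ [(x,A)] = G1 ++ (y,B) :: G2 ->
  (G1 = G /\ y = x /\ B = A /\ G2 = []) \/
  (exists G2', G2 = G2' ++ [(x,A)] /\ G = G1 ++ (y,B) :: G2').
Proof.
  intros G G1 G2 x A y B H. destruct G2 as [|e G2] using rev_ind.
  - apply app_inj_tail in H. destruct H as [H1 H2]. inversion H2; subst. left; auto.
  - right. exists G2. rewrite app_comm_cons, app_assoc in H.
    apply app_inj_tail in H. destruct H as [H1 H2]. subst. split; auto.
    all: try (rewrite <- app_assoc; reflexivity).
Qed.

Definition CtxP (P : ctx -> term -> term -> Prop) (G : ctx) :=
  forall G1 y B G2, G = G1 ++ (y,B) :: G2 -> exists i, typing G1 B (univ i) /\ P G1 B (univ i).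

Lemma typing_ind' (P : ctx -> term -> term -> Prop)
 (Hvar : forall G x A, wf G -> CtxP P G -> In (x,A) G -> P G (fvar x) A)
 (Huniv : forall G i, wf G -> CtxP P G -> P G (univ i) (univ (S i)))
 (Hpi : forall G A B i j L, typing G A (univ i) -> P G A (univ i) ->
    (forall x, ~In x L -> typing (G++[(x,A)]) (open B x) (univ j)) ->
    (forall x, ~ In x L -> P (G++[(x,A)]) (open B x) (univ j)) ->
    P G (pi A B) (univ (Nat.max i j)))
 (Happ : forall G M N A B, typing G M (pi A B) -> P G M (pi A B) -> typing G N A -> P G N A ->
    P G (app M N) (inst B N))
 (Hlam : forall G A M B L, (forall x, ~In x L -> typing (G++[(x,A)]) (open M x) (open B x)) ->
    (forall x, ~In x L -> P (G++[(x,A)]) (open M x) (open B x)) ->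
    (exists i, typing G A (univ i) /\ P G A (univ i)) -> P G (lam A M) (pi A B))
 (Hconv : forall G M A B i, typing G M A -> P G M A -> typing G B (univ i) -> P G B (univ i) ->
    equiv A B -> P G M B) :
 forall G M A, typing G M A -> P G M A /\ CtxP P G.
Proof.
  apply (typing_mut (fun G _ => CtxP P G) (fun G M A _ => P G M A /\ CtxP P G)).
  - intros G1 y B G2 H. destruct G1; discriminate.
  - intros G x A i w IHw t IHt n G1 y B G2 H.
    apply app_last_decomp in H. destruct H as [[? [? [? ?]]]|[G2' [? ?]]]; subst.
    + exists i. split; auto. apply IHt.
    + eapply IHw; eauto.
  - intros. split; auto.
  - intros. split; auto.
  - intros G A B i j L t H t0 H0. split. apply Hpi with L; auto. apply H. intros; apply H0; auto. apply H.
  - intros G M N A B t H t0 H0. split. apply Happ with A; auto. apply H. apply H0. apply H.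
  - intros G A M B L t IH. set (x := fresh L).
    destruct (IH x (fresh_not_in L)) as [_ HC].
    split.
    + apply Hlam with L; auto. intros; apply IH; auto.
      destruct (HC G x A []) as [i [? ?]]; eauto.
    + intros G1 y B0 G2 H. apply (HC G1 y B0 (G2 ++ [(x,A)])). subst. rewrite <- app_assoc. reflexivity.
  - intros G M A B i t H t0 H0 e. split. eapply Hconv; eauto. apply H. apply H0. apply H.
Qed.

Lemma wf_nodup : forall G, wf G -> NoDup (dom G).
Proof.
  induction 1.
  - constructor.
  - unfold dom in *. rewrite map_app. simpl. apply NoDup_app; auto.
    + constructor; auto. constructor.
    + intros z Hz Hz'. simpl in Hz'. destruct Hz'; [subst|auto]. contradiction.
Qed.

Lemma typing_wf : forall G M A, typing G M A -> wf G.
Proof.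
  intros G M A H. apply (typing_ind' (fun G _ _ => wf G)) in H; [apply H|..]; intros; auto.
  all: try match goal with H : exists i, _ |- _ => destruct H as [? [? ?]]; auto end.
Qed.

Lemma wf_prefix : forall G1 G2, wf (G1 ++ G2) -> wf G1.
Proof.
  intros G1 G2; revert G1; induction G2 using rev_ind; intros.
  - rewrite app_nil_r in H; auto.
  - rewrite app_assoc in H. inversion H. destruct (G1 ++ G2); discriminate.
    apply app_inj_tail in H0. destruct H0; subst. auto.
Qed.

Lemma wf_last : forall G x A, wf (G ++ [(x,A)]) -> (exists i, typing G A (univ i)) /\ ~ In x (dom G).
Proof.
  intros. inversion H. destruct G; discriminate.
  apply app_inj_tail in H0. destruct H0 as [? H0]; inversion H0; subst. eauto.
Qed.

Lemma wf_entry : forall G G1 x A G2, wf G -> G = G1 ++ (x,A) :: G2 ->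
  (exists i, typing G1 A (univ i)) /\ ~ In x (dom G1).
Proof.
  intros. subst. replace (G1 ++ (x,A) :: G2) with ((G1 ++ [(x,A)]) ++ G2) in H
    by (rewrite <- app_assoc; reflexivity).
  apply wf_prefix in H. apply wf_last; auto.
Qed.

Lemma in_dom : forall (G : ctx) x A, In (x,A) G -> In x (dom G).
Proof. intros. unfold dom. apply in_map_iff. exists (x,A); auto. Qed.

Lemma dom_in : forall (G : ctx) x, In x (dom G) -> exists A, In (x,A) G.
Proof. intros. unfold dom in H. apply in_map_iff in H. destruct H as [[y A] [? ?]]. simpl in H; subst; eauto. Qed.

Lemma nodup_uniq : forall (G : ctx) x A B, NoDup (dom G) -> In (x,A) G -> In (x,B) G -> A = B.
Proof.
  induction G as [|[y C] G IH]; simpl; intros; [tauto|].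
  inversion H; subst. destruct H0; destruct H1.
  - congruence.
  - inversion H0; subst. exfalso; apply H4. eapply in_dom; eauto.
  - inversion H1; subst. exfalso; apply H4. eapply in_dom; eauto.
  - eauto.
Qed.

Lemma in_split_ctx : forall (G : ctx) x A, In (x,A) G -> exists G1 G2, G = G1 ++ (x,A) :: G2.
Proof. intros. apply in_split; auto. Qed.

Lemma typing_lc : forall G M A, typing G M A -> lc_at 0 M /\ lc_at 0 A.
Proof.
  intros G M A H. apply (typing_ind' (fun G M A => lc_at 0 M /\ lc_at 0 A)) in H; [apply H|..];
  clear; intros; simpl; auto.
  - destruct (in_split_ctx _ _ _ H1) as [G1 [G2 ?]].
    destruct (H0 G1 x A G2 H2) as [i [_ [? _]]]. auto.
  - set (x := fresh L). destruct (H2 x (fresh_not_in L)) as [H3 _]. destruct H0.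
    split; auto. split; auto. eapply lc_bsubst_inv; eauto.
  - destruct H0 as [? Hp]. simpl in Hp. destruct Hp. destruct H2. split; auto. unfold inst. apply lc_bsubst; auto.
  - destruct H1 as [i [_ [? _]]]. set (x := fresh L). destruct (H0 x (fresh_not_in L)) as [H3 H4].
    split; split; auto; eapply lc_bsubst_inv; eauto.
  - split; [apply H0|apply H2].
Qed.

Lemma fv_open_dom : forall (G : ctx) A B z L,
  (forall x, ~ In x L -> forall w, In w (fv (open B x)) -> In w (dom (G ++ [(x,A)]))) ->
  In z (fv B) -> In z (dom G).
Proof.
  intros G A B z L Hb Hz. assert (H1 : ~ In (fresh (z :: L)) (z :: L)) by apply fresh_not_in.
  generalize dependent (fresh (z :: L)). intros x H1.
  assert (H2 : ~ In x L) by (simpl in H1; tauto).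
  specialize (Hb x H2 z (fv_bsubst2 _ _ _ _ Hz)).
  unfold dom in Hb. rewrite map_app, in_app_iff in Hb. simpl in Hb.
  destruct Hb as [H|[H|H]]; auto. subst. simpl in H1; tauto. tauto.
Qed.

Lemma typing_fv : forall G M A, typing G M A ->
  (forall z, In z (fv M) -> In z (dom G)) /\ (forall z, In z (fv A) -> In z (dom G)).
Proof.
  intros G M A H.
  apply (typing_ind' (fun G M A => (forall z, In z (fv M) -> In z (dom G)) /\
     (forall z, In z (fv A) -> In z (dom G)))) in H; [apply H|..]; clear; intros; simpl.
  - split; intros.
    + destruct H2; [subst|tauto]. eapply in_dom; eauto.
    + destruct (in_split_ctx _ _ _ H1) as [G1 [G2 ?]].
      destruct (H0 G1 x A G2 H3) as [i [_ [? _]]]. apply H4 in H2. subst.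
      unfold dom. rewrite map_app, in_app_iff. auto.
  - split; intros; simpl in *; tauto.
  - destruct H0 as [H0a _]. split; intros z Hz; simpl in Hz; [|tauto].
    apply in_app_iff in Hz. destruct Hz as [Hz|Hz]; [auto|].
    eapply fv_open_dom; [|exact Hz]. intros x Hx; apply (H2 x Hx).
  - destruct H0 as [H0 H0']. destruct H2 as [H2 H2']. split; intros; simpl in *.
    + rewrite in_app_iff in H3. destruct H3; auto.
    + unfold inst in H3. apply fv_bsubst in H3. destruct H3; auto.
      apply H0'. simpl. rewrite in_app_iff. auto.
  - destruct H1 as [i [_ [H1 _]]].
    split; intros; simpl in *; rewrite in_app_iff in H2; destruct H2; auto.
    + eapply fv_open_dom with (L := L); [|exact H2]. intros x Hx; apply (H0 x Hx).
    + eapply fv_open_dom with (L := L); [|exact H2]. intros x Hx; apply (H0 x Hx).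
  - split; [apply H0|apply H2].
Qed.

Lemma incl_snoc : forall (G G' : ctx) e, incl G G' -> incl (G ++ [e]) (G' ++ [e]).
Proof.
  intros G G' e H a Ha. apply in_app_iff in Ha. apply in_app_iff. destruct Ha; auto.
Qed.

Lemma dom_app : forall (G1 G2 : ctx) x, In x (dom (G1 ++ G2)) <-> In x (dom G1) \/ In x (dom G2).
Proof. intros. unfold dom. rewrite map_app, in_app_iff. tauto. Qed.

Lemma weakening : forall G M A, typing G M A -> forall G', wf G' -> incl G G' -> typing G' M A.
Proof.
  intros G M A H.
  apply (typing_ind' (fun G M A => forall G', wf G' -> incl G G' -> typing G' M A)) in H;
    [apply H|..]; clear; intros.
  - apply t_var; auto.
  - apply t_univ; auto.
  - apply t_pi with (L := L ++ dom G'); auto.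
    intros x Hx. rewrite in_app_iff in Hx. apply (H2 x); [tauto | | apply incl_snoc; auto].
    eapply wf_ext; eauto; tauto.
  - eapply t_app; eauto.
  - destruct H1 as [i [_ HA]].
    apply t_lam with (L := L ++ dom G'); auto.
    intros x Hx. rewrite in_app_iff in Hx. apply (H0 x); [tauto | | apply incl_snoc; auto].
    eapply wf_ext; eauto; tauto.
  - eapply t_conv; eauto.
Qed.

Lemma weaken_last : forall G M T x A i, typing G M T -> typing G A (univ i) -> ~ In x (dom G) ->
  typing (G ++ [(x,A)]) M T.
Proof.
  intros. eapply weakening; eauto. eapply wf_ext; eauto. eapply typing_wf; eauto.
  intros a Ha; apply in_app_iff; auto.
Qed.

Lemma equiv_fsubst : forall L M, equiv L M -> forall x u, lc_at 0 u ->
  equiv (fsubst x u L) (fsubst x u M).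
Proof.
  induction 1; intros.
  - eapply eq_join; eapply reds_fsubst; eauto.
  - eapply eq_eta1.
    + apply reds_fsubst with (x := x) (u := u) in H; auto. exact H.
    + apply reds_fsubst; eauto.
    + specialize (IHequiv x u H2). simpl in IHequiv. rewrite fsubst_lift in IHequiv; auto.
  - eapply eq_eta2.
    + apply reds_fsubst; eauto.
    + apply reds_fsubst with (x := x) (u := u) in H0; auto. exact H0.
    + specialize (IHequiv x u H2). simpl in IHequiv. rewrite fsubst_lift in IHequiv; auto.
Qed.

Definition csubst (x : atom) (u : term) (G : ctx) : ctx :=
  map (fun e => (fst e, fsubst x u (snd e))) G.

Lemma dom_csubst : forall x u G, dom (csubst x u G) = dom G.
Proof. intros. unfold dom, csubst. rewrite map_map. reflexivity. Qed.

Lemma csubst_app : forall x u G1 G2, csubst x u (G1 ++ G2) = csubst x u G1 ++ csubst x u G2.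
Proof. intros. unfold csubst. apply map_app. Qed.

Lemma in_csubst : forall x u (G : ctx) y A, In (y,A) G -> In (y, fsubst x u A) (csubst x u G).
Proof. intros. unfold csubst. apply in_map_iff. exists (y,A); auto. Qed.

Lemma in_csubst_inv : forall x u (G : ctx) y B, In (y,B) (csubst x u G) -> exists A, B = fsubst x u A /\ In (y,A) G.
Proof.
  intros. unfold csubst in H. apply in_map_iff in H. destruct H as [[z A] [H1 H2]].
  simpl in H1. inversion H1; subst. eauto.
Qed.

Lemma wf_entry_fv : forall G y A, wf G -> In (y,A) G -> forall z, In z (fv A) -> In z (dom G).
Proof.
  intros. destruct (in_split_ctx _ _ _ H0) as [G1 [G2 ?]].
  destruct (wf_entry _ _ _ _ _ H H2) as [[i Hi] _].
  apply typing_fv in Hi. apply Hi in H1. subst. apply dom_app. auto.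
Qed.

Lemma fsubst_id : forall t x, fsubst x (fvar x) t = t.
Proof.
  induction t; simpl; intros; f_equal; auto. destruct (Nat.eqb_spec x x0); subst; auto.
Qed.

Definition SubstP G M T := forall G1 x C G2 N,
  G = G1 ++ (x,C) :: G2 -> typing G1 N C ->
  typing (G1 ++ csubst x N G2) (fsubst x N M) (fsubst x N T).

Lemma CtxP_prefix : forall P G e, CtxP P (G ++ [e]) -> CtxP P G.
Proof.
  intros P G e H G1 y B G2 E. apply (H G1 y B (G2 ++ [e])). subst. rewrite <- app_assoc. reflexivity.
Qed.

Lemma wf_subst_aux : forall G2 G1 x C N, wf (G1 ++ (x,C) :: G2) -> CtxP SubstP (G1 ++ (x,C) :: G2) ->
  typing G1 N C -> wf (G1 ++ csubst x N G2).
Proof.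
  intros G2. induction G2 as [|[y B] G2 IH] using rev_ind; intros G1 x C N Hw HC HN.
  - simpl. rewrite app_nil_r. eapply typing_wf; eauto.
  - rewrite csubst_app. simpl. rewrite app_assoc.
    rewrite app_comm_cons, app_assoc in Hw, HC.
    destruct (wf_last _ _ _ Hw) as [_ Hy].
    destruct (HC (G1 ++ (x,C) :: G2) y B []) as [i [_ Hi]]. rewrite <- app_assoc. reflexivity.
    specialize (Hi G1 x C G2 N eq_refl HN). simpl in Hi.
    eapply wf_ext; eauto.
    + apply (IH G1 x C N); auto. eapply wf_prefix; eauto. eapply CtxP_prefix; eauto.
    + rewrite dom_app, dom_csubst. rewrite dom_app in Hy. simpl in Hy. tauto.
Qed.

Lemma open_fsubst : forall B x N y, lc_at 0 N -> y <> x ->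
  fsubst x N (open B y) = open (fsubst x N B) y.
Proof.
  intros. unfold open, inst. rewrite fsubst_bsubst; auto. simpl.
  destruct (Nat.eqb_spec y x); [contradiction|auto].
Qed.

Lemma subst_lemma : forall G M T, typing G M T -> SubstP G M T.
Proof.
  intros G M T H.
  apply (typing_ind' SubstP) in H; [apply H|..]; clear; unfold SubstP; intros.
  -
    assert (Hwf : wf (G1 ++ csubst x0 N G2)) by (subst; eapply wf_subst_aux; eauto).
    assert (HN := typing_lc _ _ _ H3). destruct HN as [HNlc _].
    destruct (wf_entry _ _ _ _ _ H H2) as [[k Hk] Hx0].
    assert (HC : ~ In x0 (fv C)).
    { intro Hc. apply Hx0. apply (proj1 (typing_fv _ _ _ Hk)); auto. }
    simpl. destruct (Nat.eqb_spec x x0).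
    + subst x0. assert (A = C).
      { apply nodup_uniq with (G := G) (x := x); [apply wf_nodup; auto | auto | subst; apply in_app_iff; simpl; auto]. }
      subst A. rewrite fsubst_fresh; auto.
      eapply weakening; eauto. intros a Ha; apply in_app_iff; auto.
    + apply t_var; auto. subst G. apply in_app_iff in H1. destruct H1 as [H1|[H1|H1]].
      * apply in_app_iff. left. rewrite fsubst_fresh; auto.
        intro Hf. apply Hx0. eapply wf_entry_fv; eauto. apply typing_wf in H3; auto.
      * inversion H1; subst. contradiction.
      * apply in_app_iff. right. apply in_csubst; auto.
  - simpl. apply t_univ. subst; eapply wf_subst_aux; eauto.
  - simpl. assert (HNlc := proj1 (typing_lc _ _ _ H4)).
    apply t_pi with (L := x :: L).
    + apply (H0 G1 x C G2 N); auto.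
    + intros y Hy. simpl in Hy.
      specialize (H2 y ltac:(tauto) G1 x C (G2 ++ [(y,A)]) N).
      rewrite csubst_app in H2. simpl in H2. rewrite app_assoc in H2.
      rewrite <- open_fsubst; auto. apply H2; auto. subst. rewrite <- app_assoc. reflexivity.
  - simpl. assert (HNlc := proj1 (typing_lc _ _ _ H4)).
    unfold inst. rewrite fsubst_bsubst; auto. eapply t_app.
    + apply (H0 G1 x C G2 N0); auto.
    + apply (H2 G1 x C G2 N0); auto.
  - simpl. assert (HNlc := proj1 (typing_lc _ _ _ H3)).
    apply t_lam with (L := x :: L).
    intros y Hy. simpl in Hy.
    specialize (H0 y ltac:(tauto) G1 x C (G2 ++ [(y,A)]) N).
    rewrite csubst_app in H0. simpl in H0. rewrite app_assoc in H0.
    rewrite <- !open_fsubst; auto. apply H0; auto. subst. rewrite <- app_assoc. reflexivity.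
  - assert (HNlc := proj1 (typing_lc _ _ _ H5)).
    eapply t_conv.
    + apply (H0 G1 x C G2 N); auto.
    + apply (H2 G1 x C G2 N); auto.
    + apply equiv_fsubst; auto.
Qed.

Lemma subst_last : forall G x C M T N, typing (G ++ [(x,C)]) M T -> typing G N C ->
  typing G (fsubst x N M) (fsubst x N T).
Proof.
  intros. pose proof (subst_lemma _ _ _ H G x C [] N eq_refl H0). simpl in H1.
  rewrite app_nil_r in H1. auto.
Qed.

Lemma rename_last : forall G x A y M T, typing (G ++ [(x,A)]) M T -> ~ In y (dom G) ->
  typing (G ++ [(y,A)]) (fsubst x (fvar y) M) (fsubst x (fvar y) T).
Proof.
  intros. destruct (Nat.eq_dec x y). { subst. rewrite !fsubst_id. auto. }
  assert (Hw := typing_wf _ _ _ H). destruct (wf_last _ _ _ Hw) as [[i Hi] Hx].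
  assert (Hwy : wf (G ++ [(y,A)])) by (eapply wf_ext; eauto; eapply typing_wf; eauto).
  eapply subst_last with (C := A).
  - eapply weakening; eauto.
    + eapply wf_ext; eauto. eapply weakening; eauto. intros a Ha; apply in_app_iff; auto.
      rewrite dom_app. simpl. intuition.
    + intros a Ha. apply in_app_iff in Ha. apply in_app_iff. destruct Ha; [left; apply in_app_iff; auto|right; auto].
  - apply t_var; auto. apply in_app_iff; simpl; auto.
Qed.

Lemma rename_open : forall G x A y M B, typing (G ++ [(x,A)]) (open M x) (open B x) ->
  ~ In y (dom G) -> ~ In x (fv M) -> ~ In x (fv B) ->
  typing (G ++ [(y,A)]) (open M y) (open B y).
Proof.
  intros. apply rename_last with (y := y) in H; auto. unfold open, inst in *.
  rewrite !fsubst_open_var in H; simpl; auto.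
Qed.

Lemma rename_open_univ : forall G x A y B j, typing (G ++ [(x,A)]) (open B x) (univ j) ->
  ~ In y (dom G) -> ~ In x (fv B) ->
  typing (G ++ [(y,A)]) (open B y) (univ j).
Proof.
  intros. apply rename_last with (y := y) in H; auto. unfold open, inst in *.
  rewrite !fsubst_open_var in H; simpl; auto.
Qed.

Lemma ctx_conv_last : forall G x A A' M T k, typing (G ++ [(x,A)]) M T ->
  typing G A' (univ k) -> equiv A' A -> typing (G ++ [(x,A')]) M T.
Proof.
  intros.
  assert (Hw := typing_wf _ _ _ H). destruct (wf_last _ _ _ Hw) as [[i Hi] Hx].
  set (z := fresh (x :: dom G ++ fv M ++ fv T)).
  assert (Hz : ~ In z (x :: dom G ++ fv M ++ fv T)) by apply fresh_not_in.
  simpl in Hz. rewrite !in_app_iff in Hz.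
  assert (HwG : wf G) by (eapply typing_wf; eauto).
  assert (Hwz : wf (G ++ [(z,A')])) by (eapply wf_ext; eauto; tauto).
  assert (HAz : typing (G ++ [(z,A')]) A (univ i)).
  { eapply weakening; eauto. intros a Ha; apply in_app_iff; auto. }
  assert (H2 : typing (G ++ [(z,A')]) (fsubst x (fvar z) M) (fsubst x (fvar z) T)).
  { eapply subst_last with (C := A).
    - eapply weakening; eauto.
      + eapply wf_ext; eauto. rewrite dom_app. simpl. intuition.
      + intros a Ha. apply in_app_iff in Ha. apply in_app_iff. destruct Ha; [left; apply in_app_iff; auto|right; auto].
    - eapply t_conv; eauto. apply t_var; auto. apply in_app_iff; simpl; auto. }
  apply rename_last with (y := x) in H2; auto.
  rewrite !fsubst_back in H2; auto; tauto.
Qed.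

Lemma gen_pi : forall G P T, typing G P T -> forall A B, P = pi A B ->
  exists i j L, typing G A (univ i) /\
    (forall x, ~ In x L -> typing (G ++ [(x,A)]) (open B x) (univ j)).
Proof.
  induction 1; intros; try discriminate.
  - inversion H2; subst. eauto.
  - eauto.
Qed.

Lemma gen_lam : forall G P T, typing G P T -> forall C Q, P = lam C Q ->
  exists B0 L n, (forall y, ~ In y L -> typing (G ++ [(y,C)]) (open Q y) (open B0 y)) /\
    chain n (pi C B0) T.
Proof.
  induction 1; intros; try discriminate.
  - inversion H1; subst. exists B, L, 0. split; auto. constructor.
  - destruct (IHtyping1 C Q H2) as [B0 [L [n [H3 H4]]]].
    destruct (equiv_sized _ _ H1) as [s Hs].
    exists B0, L, (n + (s + 0)). split; auto. eapply chain_app; eauto.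
    eapply ch_eq; eauto. constructor.
Qed.

Lemma open_fresh_inst : forall G x A B N j, typing (G ++ [(x,A)]) (open B x) (univ j) ->
  typing G N A -> ~ In x (fv B) -> typing G (inst B N) (univ j).
Proof.
  intros. apply subst_last with (N := N) in H; auto. unfold open in H.
  unfold inst in *. rewrite fsubst_open_var in H; auto. apply (typing_lc _ _ _ H0).
Qed.

Lemma correctness : forall G M T, typing G M T -> exists i, typing G T (univ i).
Proof.
  intros G M T H.
  apply (typing_ind' (fun G M T => exists i, typing G T (univ i))) in H; [apply H|..]; clear; intros.
  - destruct (in_split_ctx _ _ _ H1) as [G1 [G2 E]].
    destruct (H0 G1 x A G2 E) as [i [Hi _]]. exists i.
    eapply weakening; eauto. subst. intros a Ha. apply in_app_iff; auto.
  - exists (S (S i)). apply t_univ; auto.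
  - exists (S (Nat.max i j)). apply t_univ. eapply typing_wf; eauto.
  - destruct H0 as [k Hk].
    destruct (gen_pi _ _ _ Hk A B eq_refl) as [i [j [L [HA HB]]]].
    exists j. set (x := fresh (L ++ fv B)).
    assert (Hx : ~ In x (L ++ fv B)) by apply fresh_not_in. rewrite in_app_iff in Hx.
    apply open_fresh_inst with (x := x) (A := A); [apply HB; tauto | eauto | tauto].
  - destruct H1 as [i [HA _]].
    set (x0 := fresh (L ++ fv B ++ dom G)).
    assert (Hx : ~ In x0 (L ++ fv B ++ dom G)) by apply fresh_not_in. rewrite !in_app_iff in Hx.
    destruct (H0 x0 ltac:(tauto)) as [j Hj].
    exists (Nat.max i j). apply t_pi with (L := L ++ fv B ++ dom G); auto.
    intros y Hy. rewrite !in_app_iff in Hy.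
    eapply rename_open_univ with (x := x0); eauto; tauto.
  - exists i. auto.
Qed.

Lemma J_pi_inv : forall A B A' B', J (pi A B) (pi A' B') -> J A A' /\ J B B'.
Proof.
  intros A B A' B' [Z [H1 H2]].
  apply reds_pi_inv in H1. destruct H1 as [A1 [B1 [? [? ?]]]]. subst.
  apply reds_pi_inv in H2. destruct H2 as [A2 [B2 [E [? ?]]]]. inversion E; subst.
  split; [exists A2|exists B2]; auto.
Qed.

Lemma J_equiv : forall A B, J A B -> equiv A B.
Proof. intros A B [Z [? ?]]. eapply eq_join; eauto. Qed.

Lemma SR1 : forall G M T, typing G M T -> forall M', red1 M M' -> typing G M' T.
Proof.
  intros G M T H.
  apply (typing_ind' (fun G M T => forall M', red1 M M' -> typing G M' T)) in H; [apply H|..];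
    clear; intros.
  - inversion H2.
  - inversion H1.
  - inversion H3; subst.
    + apply t_pi with (L := L); auto.
      intros x Hx. eapply ctx_conv_last; eauto.
      apply J_equiv. exists A'. split; auto. apply reds1; auto.
    + apply t_pi with (L := L); auto.
      intros x Hx. apply H2; auto. unfold open, inst. apply red1_bsubst; auto.
  - assert (Happ : typing G (app M N) (inst B N)) by (eapply t_app; eauto).
    destruct (correctness _ _ _ Happ) as [k Hk].
    inversion H3; subst.
    +
      destruct (gen_lam _ _ _ H A0 N0 eq_refl) as [B0 [L [n [HB Hch]]]].
      apply lemmaG in Hch; [|apply rigid_pi|apply rigid_pi].
      apply J_pi_inv in Hch. destruct Hch as [HCA HB0B].
      set (y := fresh (L ++ dom G ++ fv N0 ++ fv B0)).
      assert (Hy : ~ In y (L ++ dom G ++ fv N0 ++ fv B0)) by apply fresh_not_in.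
      rewrite !in_app_iff in Hy.
      specialize (HB y ltac:(tauto)).
      destruct (wf_last _ _ _ (typing_wf _ _ _ HB)) as [[c Hc] _].
      assert (HN : typing G N A0).
      { eapply t_conv; eauto. apply J_equiv, J_sym; auto. }
      apply subst_last with (N := N) in HB; auto.
      assert (HNlc := proj1 (typing_lc _ _ _ HN)).
      unfold open, inst in HB. rewrite !fsubst_open_var in HB; try tauto; auto.
      eapply t_conv; eauto. apply J_equiv.
      destruct HB0B as [B1 [? ?]]. exists (bsubst 0 N B1). split; apply reds_bsubst; auto.
    + eapply t_app; eauto.
    + eapply t_conv. eapply t_app; eauto. eauto.
      apply J_equiv. apply J_sym. apply J_reds. apply reds_bsubst_arg. apply reds1; auto.
  - destruct H1 as [i [HA HA']].
    assert (Hl : typing G (lam A M) (pi A B)) by (apply t_lam with L; auto).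
    destruct (correctness _ _ _ Hl) as [k Hk].
    inversion H2; subst.
    + eapply t_conv; eauto.
      * apply t_lam with L. intros x Hx. eapply ctx_conv_last; eauto.
        apply J_equiv. exists A'. split; auto. apply reds1; auto.
      * apply J_equiv. exists (pi A' B). split; auto. apply reds1; constructor; auto.
    + apply t_lam with L. intros x Hx. apply H0; auto. unfold open, inst. apply red1_bsubst; auto.
  - eapply t_conv; eauto.
Qed.

Lemma SR : forall M M', reds M M' -> forall G T, typing G M T -> typing G M' T.
Proof. induction 1; intros; eauto using SR1. Qed.

Lemma typed_rigid : forall G T i, typing G T (univ i) -> rigid T.
Proof.
  intros G T i H A W Hr. eapply SR in H; eauto.
  destruct (gen_lam _ _ _ H A W eq_refl) as [B0 [L [n [_ Hch]]]].
  apply lemmaG in Hch; [|apply rigid_pi|apply rigid_univ].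
  destruct Hch as [Z [H1 H2]]. apply reds_univ_inv in H2. subst.
  apply reds_pi_inv in H1. destruct H1 as [? [? [? _]]]. discriminate.
Qed.

Lemma equiv_typed_J : forall G A B i j, typing G A (univ i) -> typing G B (univ j) ->
  equiv A B -> J A B.
Proof.
  intros. destruct (equiv_sized _ _ H1) as [s Hs].
  apply (lemmaG (s + 0)). eapply ch_eq; eauto. constructor.
  eapply typed_rigid; eauto. eapply typed_rigid; eauto.
Qed.

Definition StrP G M T := forall G', wf G' -> incl G' G ->
  (forall z, In z (fv M) -> In z (dom G')) -> exists T', typing G' M T' /\ reds T T'.

Lemma fv_open_sub : forall B x (G' : ctx) A, (forall z, In z (fv B) -> In z (dom G')) ->
  forall z, In z (fv (open B x)) -> In z (dom (G' ++ [(x,A)])).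
Proof.
  intros. apply fv_bsubst in H0. rewrite dom_app. simpl. destruct H0 as [[H0|H0]|H0]; auto.
Qed.

Lemma strengthen : forall G M T, typing G M T -> StrP G M T.
Proof.
  intros G M T H. apply (typing_ind' StrP) in H; [apply H|..]; clear; unfold StrP; intros.
  -
    destruct (dom_in G' x) as [A' HA']. apply H4; simpl; auto.
    assert (A' = A) by (apply nodup_uniq with (G := G) (x := x); [apply wf_nodup; eauto | apply H3; eauto | eauto]).
    subst. exists A. split; auto. apply t_var; auto.
  - exists (univ (S i)). split; auto. apply t_univ; auto.
  -
    simpl in H5.
    destruct (H0 G' H3 H4) as [T1 [HA1 HT1]]. { intros; apply H5; apply in_app_iff; auto. }
    apply reds_univ_inv in HT1. subst.
    assert (Hb : forall x, ~ In x (L ++ dom G') -> typing (G' ++ [(x,A)]) (open B x) (univ j)).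
    { intros x Hx. rewrite in_app_iff in Hx.
      destruct (H2 x ltac:(tauto) (G' ++ [(x,A)])) as [T2 [HB2 HT2]].
      - eapply wf_ext; eauto.
      - apply incl_snoc; auto.
      - apply fv_open_sub. intros; apply H5; apply in_app_iff; auto.
      - apply reds_univ_inv in HT2. subst. auto. }
    exists (univ (Nat.max i j)). split; auto. apply t_pi with (L := L ++ dom G'); auto.
  -
    simpl in H5.
    destruct (H0 G' H3 H4) as [T1 [HM1 HT1]]. { intros; apply H5; apply in_app_iff; auto. }
    destruct (H2 G' H3 H4) as [A2 [HN2 HA2]]. { intros; apply H5; apply in_app_iff; auto. }
    apply reds_pi_inv in HT1. destruct HT1 as [A1 [B1 [? [HA1 HB1]]]]. subst.
    destruct (CR _ _ _ HA1 HA2) as [A3 [HA13 HA23]].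
    destruct (correctness _ _ _ HM1) as [k Hk].
    destruct (correctness _ _ _ HN2) as [m Hm].
    assert (HM3 : typing G' M (pi A3 B1)).
    { apply t_conv with (A := pi A1 B1) (i := k); auto.
      apply SR with (M := pi A1 B1); [apply reds_pi; auto | auto].
      apply J_equiv. apply J_reds. apply reds_pi; auto. }
    assert (HN3 : typing G' N A3).
    { apply t_conv with (A := A2) (i := m); auto.
      apply SR with (M := A2); auto. apply J_equiv. apply J_reds; auto. }
    exists (inst B1 N). split. eapply t_app; eauto. apply reds_bsubst; auto.
  -
    simpl in H4. destruct H1 as [i [HA HA']].
    destruct (HA' G' H2 H3) as [T1 [HA1 HT1]]. { intros; apply H4; apply in_app_iff; auto. }
    apply reds_univ_inv in HT1. subst.
    set (y0 := fresh (L ++ dom G' ++ fv M ++ fv B)).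
    assert (Hy : ~ In y0 (L ++ dom G' ++ fv M ++ fv B)) by apply fresh_not_in.
    rewrite !in_app_iff in Hy.
    destruct (H0 y0 ltac:(tauto) (G' ++ [(y0,A)])) as [T0 [HM0 HT0]].
    + eapply wf_ext; eauto; tauto.
    + apply incl_snoc; auto.
    + apply fv_open_sub. intros; apply H4; apply in_app_iff; auto.
    + apply reds_open_refl in HT0. destruct HT0 as [B1 [? HB1]]. subst.
      assert (~ In y0 (fv B1)) by (intro; apply Hy; right; right; right; eapply reds_fv; eauto).
      exists (pi A B1). split.
      * apply t_lam with (L := dom G'). intros y Hy'.
        eapply rename_open; eauto. tauto.
      * apply reds_pi; auto.
  -
    destruct (H0 G' H4 H5 H6) as [A' [HM' HA']].
    destruct (correctness _ _ _ H) as [a Ha].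
    assert (HJ := equiv_typed_J _ _ _ _ _ Ha H1 H3).
    assert (HJ' : J A' B) by (eapply J_trans; [apply J_sym, J_reds; eauto | auto]).
    destruct HJ' as [D [HD1 HD2]].
    destruct (correctness _ _ _ HM') as [m Hm].
    exists D. split; auto. apply t_conv with (A := A') (i := m); auto.
    apply SR with (M := A'); auto.
    apply J_equiv, J_reds; auto.
Qed.

Lemma strengthen_full : forall G M T G', typing G M T -> wf G' -> incl G' G ->
  (forall z, In z (fv M) -> In z (dom G')) -> (forall z, In z (fv T) -> In z (dom G')) ->
  typing G' M T.
Proof.
  intros.
  destruct (strengthen _ _ _ H G' H0 H1 H2) as [T' [HT' HR]].
  destruct (correctness _ _ _ H) as [i Hi].
  destruct (strengthen _ _ _ Hi G' H0 H1 H3) as [U [HU HRU]].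
  apply reds_univ_inv in HRU. subst.
  eapply t_conv; eauto. apply J_equiv. apply J_sym, J_reds; auto.
Qed.

Lemma undup_aux_spec : forall l seen,
  NoDup (undup_aux seen l) /\
  (forall y, In y (undup_aux seen l) <-> In y l /\ ~ In y seen).
Proof.
  induction l as [|x l IH]; intros seen; simpl.
  - split; [constructor|]. intros; tauto.
  - destruct (in_dec Nat.eq_dec x seen).
    + destruct (IH seen) as [H1 H2]. split; auto. intros y. rewrite H2.
      destruct (Nat.eq_dec x y); subst; tauto.
    + destruct (IH (x :: seen)) as [H1 H2]. split.
      * constructor; auto. rewrite H2. simpl. tauto.
      * intros y. simpl. rewrite H2. simpl. destruct (Nat.eq_dec x y); subst; tauto.
Qed.

Lemma undup_nodup : forall l, NoDup (undup l).
Proof. intros; apply undup_aux_spec. Qed.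

Lemma undup_in : forall l y, In y (undup l) <-> In y l.
Proof. intros. unfold undup. rewrite (proj2 (undup_aux_spec l [])). simpl. tauto. Qed.

Lemma lookup_in : forall G x A, lookup x G = Some A -> In (x,A) G.
Proof.
  induction G as [|[y B] G IH]; simpl; intros; [discriminate|].
  destruct (Nat.eqb_spec x y); [inversion H; subst; auto|auto].
Qed.

Lemma in_lookup : forall G x A, NoDup (dom G) -> In (x,A) G -> lookup x G = Some A.
Proof.
  induction G as [|[y B] G IH]; simpl; intros; [tauto|].
  inversion H; subst. destruct (Nat.eqb_spec x y).
  - subst. destruct H0; [congruence|]. exfalso; apply H3. eapply in_dom; eauto.
  - destruct H0; [congruence|]. auto.
Qed.

Lemma in_entries : forall G xs x A, In (x,A) (entries G xs) -> In x xs /\ lookup x G = Some A.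
Proof.
  intros. unfold entries in H. apply in_flat_map in H. destruct H as [y [Hy H]].
  destruct (lookup y G) eqn:E; simpl in H; [|tauto]. destruct H; [|tauto]. inversion H; subst. auto.
Qed.

Lemma entries_in : forall G xs x A, In x xs -> lookup x G = Some A -> In (x,A) (entries G xs).
Proof.
  intros. unfold entries. apply in_flat_map. exists x. split; auto. rewrite H0. simpl; auto.
Qed.

Lemma entries_nodup : forall G xs, NoDup xs -> NoDup (dom (entries G xs)).
Proof.
  induction xs as [|x xs IH]; intros; simpl; [constructor|].
  inversion H; subst. unfold entries in *. simpl. destruct (lookup x G) eqn:E; simpl; auto.
  constructor; auto. intro Hx. apply dom_in in Hx. destruct Hx as [B HB].
  apply in_flat_map in HB. destruct HB as [y [Hy HB]].
  destruct (lookup y G); simpl in HB; [|tauto]. destruct HB; [|tauto]. inversion H0; subst. auto.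
Qed.

Definition good (G K : ctx) :=
  incl K G /\ NoDup (dom K) /\
  (forall K1 y B K2, K = K1 ++ (y,B) :: K2 -> forall z, In z (fv B) -> In z (dom K1)).

Lemma good_nil : forall G, good G [].
Proof.
  intros. split; [intros a Ha; inversion Ha|]. split; [constructor|].
  intros. destruct K1; discriminate.
Qed.

Lemma wf_of_good : forall G, wf G -> forall K, good G K -> wf K.
Proof.
  intros G HG K. induction K as [|[y B] K IH] using rev_ind; intros [Hi [Hn Ho]].
  - constructor.
  - unfold dom in Hn. rewrite map_app in Hn. simpl in Hn.
    apply NoDup_app_remove_r in Hn as Hn'.
    assert (HK : wf K).
    { apply IH. split; [|split]; auto.
      - intros a Ha. apply Hi. apply in_app_iff; auto.
      - intros K1 y0 B0 K2 E. apply (Ho K1 y0 B0 (K2 ++ [(y,B)])). subst. rewrite <- app_assoc. auto. }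
    assert (HyG : In (y,B) G) by (apply Hi; apply in_app_iff; simpl; auto).
    destruct (in_split_ctx _ _ _ HyG) as [G1 [G2 E]].
    destruct (wf_entry _ _ _ _ _ HG E) as [[i Hb] _].
    assert (HbG : typing G B (univ i)).
    { eapply weakening; eauto. subst. intros a Ha. apply in_app_iff; auto. }
    eapply wf_ext; eauto.
    + eapply strengthen_full; eauto.
      all: try (intros a Ha; apply Hi; apply in_app_iff; auto; fail).
      all: try (simpl; tauto).
      all: intros z Hz; apply (Ho K y B []); auto.
    + intro Hy. apply NoDup_remove_2 in Hn. apply Hn. rewrite app_nil_r. auto.
Qed.

Lemma app_decomp : forall (A B H1 H2 : ctx) e, A ++ B = H1 ++ e :: H2 ->
  (exists H2', A = H1 ++ e :: H2') \/ (exists K1, H1 = A ++ K1 /\ B = K1 ++ e :: H2).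
Proof.
  induction A as [|a A IH]; intros; simpl in *.
  - right. exists H1. auto.
  - destruct H1 as [|h H1]; simpl in H.
    + injection H as -> E. left. exists A. auto.
    + injection H as -> E0. destruct (IH _ _ _ _ E0) as [[H2' E]|[K1 [E1 E2]]].
      * left. exists H2'. subst. auto.
      * right. exists K1. subst. auto.
Qed.

Lemma filter_decomp : forall (f : atom * term -> bool) l K1 e K2, filter f l = K1 ++ e :: K2 ->
  exists P1 P2, l = P1 ++ e :: P2 /\ filter f P1 = K1.
Proof.
  induction l as [|a l IH]; intros; simpl in *; [destruct K1; discriminate|].
  destruct (f a) eqn:E.
  - destruct K1 as [|k K1]; simpl in H; injection H as -> E0.
    + exists [], l. auto.
    + destruct (IH _ _ _ E0) as [P1 [P2 [? ?]]]. subst. exists (k :: P1), P2. simpl. rewrite E. auto.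
  - destruct (IH _ _ _ H) as [P1 [P2 [? ?]]]. subst. exists (a :: P1), P2. simpl. rewrite E. auto.
Qed.

Lemma nodup_dom_filter : forall (f : atom * term -> bool) (l : ctx), NoDup (dom l) -> NoDup (dom (filter f l)).
Proof.
  induction l as [|a l IH]; simpl; intros; auto. inversion H; subst.
  destruct (f a); simpl; auto. constructor; auto. intro Hx. apply H2.
  unfold dom in Hx. apply in_map_iff in Hx. destruct Hx as [b [? Hb]]. apply filter_In in Hb.
  apply in_map_iff. exists b. tauto.
Qed.

Definition cfilt (G1 : ctx) := (fun e => if in_dec entry_eq_dec e G1 then false else true).

Lemma in_cunion : forall G1 G2 e, In e (cunion G1 G2) <-> In e G1 \/ In e G2.
Proof.
  intros. unfold cunion. rewrite in_app_iff, filter_In.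
  destruct (in_dec entry_eq_dec e G1); intuition.
Qed.

Lemma good_cunion : forall G K1 K2, wf G -> good G K1 -> incl K2 G -> NoDup (dom K2) ->
  (forall H1 y B H2, K2 = H1 ++ (y,B) :: H2 -> forall z, In z (fv B) -> In z (dom K1) \/ In z (dom H1)) ->
  good G (cunion K1 K2).
Proof.
  intros G K1 K2 HG [Hi1 [Hn1 Ho1]] Hi2 Hn2 Ho2. split; [|split].
  - intros e He. apply in_cunion in He. destruct He; auto.
  - unfold cunion, dom. rewrite map_app. apply NoDup_app; auto.
    + apply nodup_dom_filter; auto.
    + intros z Hz1 Hz2. apply in_map_iff in Hz1. destruct Hz1 as [[z1 C1] [? Hc1]]. simpl in H; subst.
      apply in_map_iff in Hz2. destruct Hz2 as [[z2 C2] [? Hc2]]. simpl in H; subst.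
      apply filter_In in Hc2. destruct Hc2 as [Hc2 Hf].
      assert (C1 = C2) by (apply nodup_uniq with (G := G) (x := z); [apply wf_nodup; auto|auto|auto]).
      subst. destruct (in_dec entry_eq_dec (z, C2) K1); [discriminate|contradiction].
  - intros H1 y B H2 E z Hz. unfold cunion in E.
    destruct (app_decomp _ _ _ _ _ E) as [[H2' E1]|[Q1 [E1 E2]]].
    + eapply Ho1; eauto.
    + subst H1. destruct (filter_decomp _ _ _ _ _ E2) as [P1 [P2 [E3 E4]]].
      destruct (Ho2 P1 y B P2 E3 z Hz) as [Hz'|Hz']; apply dom_app; auto.
      apply dom_in in Hz'. destruct Hz' as [C HC].
      destruct (in_dec entry_eq_dec (z,C) K1).
      * left. eapply in_dom; eauto.
      * right. subst Q1. eapply in_dom. apply filter_In. split; eauto.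
        destruct (in_dec entry_eq_dec (z,C) K1); [contradiction|auto].
Qed.

Lemma good_cunion_good : forall G K1 K2, wf G -> good G K1 -> good G K2 -> good G (cunion K1 K2).
Proof.
  intros G K1 K2 HG H1 [Hi2 [Hn2 Ho2]]. apply good_cunion; auto.
  intros. right. eapply Ho2; eauto.
Qed.

Lemma fold_good : forall G, wf G -> forall l acc, good G acc -> (forall X, In X l -> good G X) ->
  good G (fold_left cunion l acc).
Proof.
  intros G HG. induction l as [|X l IH]; simpl; intros; auto.
  apply IH; auto. apply good_cunion_good; auto.
Qed.

Lemma fold_incl : forall l acc, incl acc (fold_left cunion l acc) /\
  (forall X, In X l -> incl X (fold_left cunion l acc)).
Proof.
  induction l as [|X l IH]; simpl; intros.
  - split; [apply incl_refl|tauto].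
  - destruct (IH (cunion acc X)) as [H1 H2]. split.
    + intros e He. apply H1. apply in_cunion; auto.
    + intros Y [HY|HY]; auto. subst. intros e He. apply H1. apply in_cunion; auto.
Qed.

Lemma fvctx_good : forall G, wf G -> forall n xs,
  (forall x, In x xs -> exists G1 A G2, G = G1 ++ (x,A) :: G2 /\ length G1 < n) ->
  NoDup xs ->
  good G (fvctx n G xs) /\ (forall x, In x xs -> In x (dom (fvctx n G xs))).
Proof.
  intros G HG. assert (HnG := wf_nodup _ HG).
  induction n as [|n IH]; intros xs Hxs Hnd.
  - simpl. split; [apply good_nil|]. intros x Hx. destruct (Hxs x Hx) as [? [? [? [? ?]]]]. lia.
  - cbn [fvctx].
    set (es := entries G xs).
    set (P := fold_left cunion (map (fun e => fvctx n G (undup (fv (snd e)))) es) []).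
    assert (Hes : forall x A, In (x,A) es -> good G (fvctx n G (undup (fv A))) /\
                  (forall z, In z (fv A) -> In z (dom (fvctx n G (undup (fv A)))))).
    { intros x A He. apply in_entries in He. destruct He as [Hx Hl].
      apply lookup_in in Hl.
      destruct (Hxs x Hx) as [G1 [A' [G2 [E Hlen]]]].
      assert (A' = A).
      { apply nodup_uniq with (G := G) (x := x); auto. subst G. apply in_app_iff; simpl; auto. }
      subst A'. destruct (wf_entry _ _ _ _ _ HG E) as [[i Hi] _].
      destruct (IH (undup (fv A))) as [IH1 IH2].
      - intros z Hz. apply (proj1 (undup_in _ _)) in Hz. apply (proj1 (typing_fv _ _ _ Hi)) in Hz.
        apply dom_in in Hz. destruct Hz as [C HC]. destruct (in_split_ctx _ _ _ HC) as [K1 [K2 EK]].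
        exists K1, C, (K2 ++ (x,A) :: G2). split.
        + subst. rewrite <- app_assoc. reflexivity.
        + subst G1. rewrite length_app in Hlen. simpl in Hlen. lia.
      - apply undup_nodup.
      - split; auto. intros z Hz. apply IH2. apply undup_in; auto. }
    assert (HP : good G P).
    { apply fold_good; auto. apply good_nil. intros X HX. apply in_map_iff in HX.
      destruct HX as [[x A] [? HX]]. subst. simpl. apply (Hes x A HX). }
    split.
    + apply good_cunion; auto.
      * intros e He. destruct e as [x A]. apply in_entries in He. destruct He. apply lookup_in; auto.
      * apply entries_nodup; auto.
      * intros H1 y B H2 E z Hz. left.
        assert (HyB : In (y,B) es) by (fold es in E; rewrite E; apply in_app_iff; simpl; auto).
        destruct (Hes y B HyB) as [_ Hd]. apply Hd in Hz.
        apply dom_in in Hz. destruct Hz as [C HC]. eapply in_dom.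
        apply (proj2 (fold_incl _ [])) with (X := fvctx n G (undup (fv B)));
          [apply in_map_iff; exists (y,B); auto | exact HC].
    + intros x Hx. destruct (Hxs x Hx) as [G1 [A [G2 [E _]]]].
      assert (In (x,A) G) by (subst; apply in_app_iff; simpl; auto).
      eapply in_dom. apply in_cunion. right. apply entries_in with (A := A); auto. apply in_lookup; auto.
Qed.

Theorem lemma3p5 : forall (G : ctx) (M A : term),
  typing G M A -> typing (FV G M A) M A.
Proof.
  intros G M A H.
  assert (HG := typing_wf _ _ _ H).
  destruct (typing_fv _ _ _ H) as [HM HA].
  destruct (fvctx_good G HG (length G) (undup (fv M ++ fv A))) as [Hg Hd].
  - intros x Hx. apply (proj1 (undup_in _ _)) in Hx. apply in_app_iff in Hx.
    assert (In x (dom G)) by (destruct Hx; auto).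
    apply dom_in in H0. destruct H0 as [B HB]. destruct (in_split_ctx _ _ _ HB) as [G1 [G2 E]].
    exists G1, B, G2. split; auto. subst. rewrite length_app. simpl. lia.
  - apply undup_nodup.
  - unfold FV. eapply strengthen_full; eauto.
    + eapply wf_of_good; eauto.
    + apply Hg.
    + intros z Hz. apply Hd. apply undup_in. apply in_app_iff; auto.
    + intros z Hz. apply Hd. apply undup_in. apply in_app_iff; auto.
Qed.
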